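(* Let $p>3$ be a prime. The number $N_{2,p}$ of $\overline{\mathbb{F}}_p$... more precisely, of $\mathbb{F}_p$-isomorphism classes of elliptic curves $E$ over $\mathbb{F}_p$ that possess an $\mathbb{F}_p$-rational point of order $2$ is \[ N_{2,p}=\begin{cases} \frac{4p+8}{3}, &\text{if } p\equiv 1\pmod{12},\\ \frac{4p+4}{3}, &\text{if } p\equiv 5\pmod{12},\\ \frac{4p+2}{3}, &\text{if } p\equiv 7\pmod{12},\\ \frac{4p-2}{3}, &\text{if } p\equiv 11\pmod{12}. \end{cases} \]
   Context: Isomorphism classes are taken over $\mathbb{F}_p$ (i.e., isomorphisms defined over $\mathbb{F}_p$). ''Possessing 2-torsion over $\mathbb{F}_p$'' means $E(\mathbb{F}_p)$ contains a point of order $2$, equivalently $2\mid \#E(\mathbb{F}_p)$. *)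

(* Defs.v *)
From HB Require Import structures.
From mathcomp Require Import all_boot all_order all_algebra.
Set Implicit Arguments. Unset Strict Implicit. Unset Printing Implicit Defensive.
Import GRing.Theory.
Local Open Scope ring_scope.

(* Over F_p with p > 3, every elliptic curve is F_p-isomorphic to a short
   Weierstrass curve  E_{a,b} : y^2 = x^3 + a x + b  with 4a^3+27b^2 <> 0,
   and E_{a,b} ~ E_{a',b'} over F_p iff a' = u^4 a, b' = u^6 b, u in F_p^*. *)

Definition nonsingular (p : nat) (c : 'F_p * 'F_p) : bool :=
  4 * c.1 ^+ 3 + 27 * c.2 ^+ 2 != 0.

Definition wiso (p : nat) (c c' : 'F_p * 'F_p) : bool :=
  [exists u : 'F_p, (u != 0) && (c'.1 == u ^+ 4 * c.1) && (c'.2 == u ^+ 6 * c.2)].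

(* #E(F_p) : affine solutions plus the point at infinity *)
Definition npoints (p : nat) (c : 'F_p * 'F_p) : nat :=
  (#|[set xy : 'F_p * 'F_p | xy.2 ^+ 2 == xy.1 ^+ 3 + c.1 * xy.1 + c.2]|).+1.

(* E(F_p) has a point of order 2, i.e. 2 | #E(F_p) *)
Definition has_2torsion (p : nat) (c : 'F_p * 'F_p) : bool :=
  (2 %| npoints c)%N.

Definition N2 (p : nat) : nat :=
  #|[set [set c' | wiso c c'] |
      c in [set c : 'F_p * 'F_p | nonsingular c && has_2torsion c]]|.

(* Main.v *)
From HB Require Import structures.
Require Import Defs.
From mathcomp Require Import all_boot all_order all_algebra all_fingroup all_solvable all_field.
From mathcomp Require Import ring zify.
Set Implicit Arguments. Unset Strict Implicit. Unset Printing Implicit Defensive.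
Import GRing.Theory.

Section Main.
Variable p : nat.
Hypothesis pr : prime p.
Hypothesis p3 : (3 < p)%N.
Local Notation F := 'F_p.
Local Open Scope ring_scope.

Lemma natF0 n : ((n%:R : F) == 0) = (p %| n)%N.
Proof. by rewrite -(dvdn_pcharf (pchar_Fp pr)). Qed.

Lemma natF_neq0 n : (0 < n < p)%N -> (n%:R : F) != 0.
Proof.
case/andP=> n0 np; rewrite natF0; apply/negP => /dvdn_leq h.
by move: (h n0); rewrite leqNgt np.
Qed.

Lemma two0 : (2 : F) != 0. Proof. by apply: natF_neq0; lia. Qed.
Lemma three0 : (3 : F) != 0. Proof. by apply: natF_neq0; lia. Qed.
Lemma four0 : (4 : F) != 0.
Proof. have -> : (4 : F) = 2 * 2 by ring. by rewrite mulf_neq0 // two0. Qed.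

Lemma cardF : #|F| = p. Proof. exact: card_Fp. Qed.

Lemma fermat (x : F) : x != 0 -> x ^+ p.-1 = 1.
Proof.
move=> x0; have e : (p.-1).+1 = #|F| by rewrite cardF prednK // prime_gt0.
have := expf_card x; rewrite -e exprS.
by move=> h; apply: (mulfI x0); rewrite h mulr1.
Qed.

Lemma one_neq_m1 : (1 : F) != -1.
Proof.
apply/negP=> /eqP h; have : (2 : F) == 0 by rewrite -[2]/(1 + 1) {2}h subrr.
by rewrite (negbTE two0).
Qed.

Lemma RUg (x : F) k : (0 < k)%N -> x ^+ k = 1 -> x ^+ (gcdn k p.-1) = 1.
Proof.
move=> k0 xk.
have x0 : x != 0 by apply/negP=> /eqP x0; move: xk; rewrite x0 expr0n; case: k k0 => // k _ /eqP; rewrite eq_sym oner_eq0.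
have [m pm mk] := prim_order_exists k0 xk.
have mp : (m %| p.-1)%N by rewrite (prim_order_dvd pm) fermat.
by apply/eqP; rewrite -(prim_order_dvd pm) dvdn_gcd mk mp.
Qed.

Lemma RU k : (0 < k)%N -> (k %| p.-1)%N -> #|[set x : F | x ^+ k == 1]| = k.
Proof.
move=> k0 kd.
pose rs := enum [set~ (0 : F)].
have n0 : (0 < p.-1)%N by have := p3; lia.
have : has (p.-1).-primitive_root rs.
  apply: has_prim_root => //.
  - apply/allP=> x; rewrite mem_enum !inE unity_rootE => x0; by rewrite fermat.
  - exact: enum_uniq.
  - by rewrite -cardE cardsC1 cardF.
case/hasP=> z _ pz.
set q := (p.-1 %/ k)%N.
have qn : (p.-1 = q * k)%N by rewrite /q divnK.
have q0 : (0 < q)%N by move: n0; rewrite qn; rewrite muln_gt0 => /andP[].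
have pw : k.-primitive_root (z ^+ q).
  have := exp_prim_root pz q.
  have -> : gcdn q p.-1 = q by apply/gcdn_idPl; rewrite qn dvdn_mulr.
  by rewrite qn mulKn.
have -> : [set x : F | x ^+ k == 1] = [set (z ^+ q) ^+ (val i) | i : 'I_k].
  apply/setP=> x; rewrite inE; apply/idP/imsetP.
    by move/eqP=> /(prim_rootP pw) [i ->]; exists i.
  by case=> i _ ->; rewrite -!exprM mulnAC !exprM (prim_expr_order pw) expr1n.
rewrite card_imset ?card_ord //.
move=> i j /eqP; rewrite (eq_prim_root_expr pw) !modn_small ?ltn_ord // => /eqP h.
exact: val_inj.
Qed.


Definition fc (c : F * F) (x : F) := x ^+ 3 + c.1 * x + c.2.
Definition roots c := [set x | fc c x == 0].
Definition nrt c := #|roots c|.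
Definition c0 (x y : F) : F * F := (- (x ^+ 2 + x * y + y ^+ 2), x * y * (x + y)).

Lemma two_roots c x y : fc c x = 0 -> fc c y = 0 -> x != y -> c = c0 x y.
Proof.
case: c => a b /= hx hy xy.
have : (x - y) * (x ^+ 2 + x * y + y ^+ 2 + a) = fc (a, b) x - fc (a, b) y.
  by rewrite /fc /=; ring.
rewrite hx hy subrr => /eqP; rewrite mulf_eq0 subr_eq0 (negbTE xy) /= => /eqP h.
have ha : a = - (x ^+ 2 + x * y + y ^+ 2).
  by apply/eqP; rewrite -subr_eq0 opprK addrC h.
have hb : b = x * y * (x + y).
  transitivity (b - fc (a, b) x); first by rewrite hx subr0.
  by rewrite /fc /= ha; ring.
by rewrite /c0 ha hb.
Qed.

Lemma factor x y t : fc (c0 x y) t = (t - x) * (t - y) * (t + x + y).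
Proof. rewrite /fc /c0 /=; ring. Qed.

Lemma disc0 x y : 4 * (c0 x y).1 ^+ 3 + 27 * (c0 x y).2 ^+ 2
   = - ((x - y) * (x + 2 * y) * (2 * x + y)) ^+ 2.
Proof. rewrite /c0 /=; ring. Qed.

Lemma nsc0 x y : nonsingular (c0 x y) = ((x - y) * (x + 2 * y) * (2 * x + y) != 0).
Proof. by rewrite /nonsingular disc0 oppr_eq0 sqrf_eq0. Qed.

Lemma nrt013 c : nonsingular c -> [|| nrt c == 0%N, nrt c == 1%N | nrt c == 3%N].
Proof.
move=> ns; rewrite /nrt.
case: (leqP #|roots c| 1) => h; first by move: h; case: #|_| => [|[|]].
case/card_gt1P: h => x [y [xr yr xy]].
move: xr yr; rewrite !inE => /eqP xr /eqP yr.
have e := two_roots xr yr xy.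
have : nonsingular (c0 x y) by rewrite -e.
rewrite nsc0 !mulf_eq0 !negb_or => /andP[/andP[_ h1] h2].
have -> : roots c = [set x; y; - x - y].
  apply/setP=> t; rewrite !inE e factor !mulf_eq0 !subr_eq0 -!orbA.
  by rewrite -addrA addr_eq0 opprD.
have n1 : (y != - x - y).
  apply: contra h1 => /eqP h; apply/eqP.
  have -> : x + 2 * y = - (- x - y - y) by ring.
  by rewrite -h subrr oppr0.
have n2 : (x != - x - y).
  apply: contra h2 => /eqP h; apply/eqP.
  have -> : 2 * x + y = - (- x - y - x) by ring.
  by rewrite -h subrr oppr0.
have -> : #|[set x; y; - x - y]| = 3%N.
  by rewrite setUC cardsU1 cards2 xy !inE negb_or eq_sym n2 eq_sym n1.
by [].
Qed.

Lemma card_sum (T : finType) (P : pred T) : #|[set x | P x]| = (\sum_(x : T) P x)%N.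
Proof.
rewrite -sum1_card big_mkcond /=; apply: eq_bigr => x _; rewrite inE; by case: (P x).
Qed.

Lemma card_pair (P : F -> F -> bool) :
  #|[set xy : F * F | P xy.1 xy.2]| = (\sum_(x : F) #|[set y | P x y]|)%N.
Proof.
rewrite card_sum /= -(pair_bigA _ (fun x y => nat_of_bool (P x y))) /=.
by apply: eq_bigr => x _; rewrite card_sum.
Qed.

Lemma odd_sum (I : Type) (r : seq I) (g : I -> nat) :
  odd (\sum_(i <- r) g i)%N = odd (\sum_(i <- r) odd (g i))%N.
Proof. elim: r => [|a r IH]; rewrite ?big_nil ?big_cons // !oddD IH.
by case: (odd (g a)). Qed.

Lemma odd_sq (v : F) : odd #|[set y : F | y ^+ 2 == v]| = (v == 0).
Proof.
case v0: (v == 0).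
  move/eqP: v0 => ->.
  have -> : [set y : F | y ^+ 2 == 0] = [set 0].
    by apply/setP=> y; rewrite !inE sqrf_eq0.
  by rewrite cards1.
case: (set_0Vmem [set y : F | y ^+ 2 == v]) => [-> | [y0]]; first by rewrite cards0.
rewrite inE => /eqP hy0.
have -> : [set y : F | y ^+ 2 == v] = [set y0; - y0].
  by apply/setP=> y; rewrite !inE -hy0 eqf_sqr.
rewrite cards2.
have -> : y0 != - y0.
  apply/negP => /eqP h.
  have : (2 * y0 == 0) by rewrite mulr2n mulrDl mul1r {2}h subrr.
  rewrite mulf_eq0 (negbTE two0) /= => /eqP y00.
  by move: v0; rewrite -hy0 y00 expr0n eqxx.
by [].
Qed.

Lemma torsion c : nonsingular c -> has_2torsion c = (0 < nrt c)%N.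
Proof.
move=> ns; rewrite /has_2torsion /npoints dvdn2 /= negbK.
rewrite (card_pair (fun x y => y ^+ 2 == x ^+ 3 + c.1 * x + c.2)) odd_sum.
have -> : (\sum_(x : F) odd #|[set y | (y ^+ 2 == x ^+ 3 + c.1 * x + c.2)%R]|)%N = nrt c.
  by rewrite /nrt /roots card_sum; apply: eq_bigr => x _; rewrite odd_sq.
by have := nrt013 ns; case/or3P=> /eqP ->.
Qed.


Lemma key3 c : nonsingular c -> (3 * (0 < nrt c) + nrt c * (nrt c).-1 = 3 * nrt c)%N.
Proof. by move/nrt013; case/or3P=> /eqP ->. Qed.

Lemma sum_eq1 (T : finType) (v : T) (Q : pred T) : (\sum_(b : T) (Q b && (b == v)))%N = Q v.
Proof.
rewrite (bigD1 v) //= eqxx andbT big1 ?addn0 // => b /negbTE ->; by rewrite andbF.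
Qed.

Lemma sum_neq (T : finType) (x : T) (P : pred T) : P x ->
  (\sum_(y : T) ((x != y) && P y) = #|[set y | P y]| - 1)%N.
Proof.
move=> Px; rewrite card_sum [in RHS](bigD1 x) //= Px add1n subn1 /=.
rewrite (bigD1 x) //= eqxx /= add0n.
by apply: eq_bigr => y yx; rewrite eq_sym yx.
Qed.

Lemma nrt_sum c : nrt c = (\sum_(x : F) (fc c x == 0)%R)%N.
Proof. by rewrite /nrt /roots card_sum. Qed.

Lemma nrt2_sum c : (nrt c * (nrt c).-1 =
  \sum_(x : F) \sum_(y : F) ((x != y) && (fc c x == 0)%R && (fc c y == 0)%R))%N.
Proof.
rewrite (eq_bigr (fun x => if x \in roots c then (nrt c).-1 else 0%N)).
  by rewrite -big_mkcond sum_nat_const mulnC.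
move=> x _; case xr: (x \in roots c).
  move: (xr); rewrite inE => fx.
  transitivity (\sum_(y:F) ((x != y) && (fc c y == 0)%R))%N.
    by apply: eq_bigr => y _; rewrite fx andbT.
  by rewrite (sum_neq (P := fun y => (fc c y == 0)%R)) // subn1.
move: xr; rewrite inE => fx.
by rewrite big1 // => y _; rewrite fx andbF.
Qed.

Lemma count_main (C : pred (F * F)) : (forall c, C c -> nonsingular c) ->
  (3 * #|[set c | C c && (0 < nrt c)]| +
   \sum_(x : F) \sum_(y : F) #|[set c | C c && ((x != y) && (fc c x == 0)%R && (fc c y == 0)%R)]|
  = 3 * \sum_(x : F) #|[set c | C c && (fc c x == 0)%R]|)%N.
Proof.
move=> CN.
have e1 : (\sum_(x : F) #|[set c | C c && (fc c x == 0)%R]| = \sum_(c : F * F) C c * nrt c)%N.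
  rewrite (eq_bigr (fun x => \sum_(c : F*F) (C c && (fc c x == 0)%R))%N); last first.
    by move=> x _; rewrite card_sum.
  rewrite exchange_big /=; apply: eq_bigr => c _; rewrite nrt_sum big_distrr /=.
  by apply: eq_bigr => x _; case: (C c); rewrite ?mul1n ?mul0n.
have e2 : (\sum_(x : F) \sum_(y : F) #|[set c | C c && ((x != y) && (fc c x == 0)%R && (fc c y == 0)%R)]|
    = \sum_(c : F * F) C c * (nrt c * (nrt c).-1))%N.
  rewrite (eq_bigr (fun x => \sum_(c : F * F) \sum_(y : F)
     (C c && ((x != y) && (fc c x == 0)%R && (fc c y == 0)%R)))%N); last first.
    by move=> x _; rewrite exchange_big; apply: eq_bigr => y _; rewrite card_sum.
  rewrite exchange_big /=; apply: eq_bigr => c _; rewrite nrt2_sum big_distrr /=.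
  apply: eq_bigr => x _; rewrite big_distrr /=.
  by apply: eq_bigr => y _; case: (C c); rewrite ?mul1n ?mul0n.
rewrite e1 e2 card_sum big_distrr /= -big_split /= big_distrr /=.
apply: eq_bigr => c _; case Cc: (C c); last by rewrite /= !muln0.
by rewrite /= !mul1n key3 // CN.
Qed.


Lemma sum_pair (g : F * F -> nat) :
  (\sum_(c : F * F) g c = \sum_(a : F) \sum_(b : F) g (a, b))%N.
Proof. by rewrite pair_bigA; apply: eq_bigr => -[a b] _. Qed.

Lemma avoid3 r1 r2 r3 :
  (\sum_(a : F) ((a - r1) * (a - r2) * (a - r3) != 0)%R = #|F| - #|[set r1; r2; r3]|)%N.
Proof.
rewrite -card_sum.
have -> : [set a : F | (a - r1) * (a - r2) * (a - r3) != 0] = ~: [set r1; r2; r3].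
  by apply/setP=> a; rewrite !inE !mulf_eq0 !subr_eq0 !negb_or.
by rewrite -(cardsC [set r1; r2; r3]) addKn.
Qed.

Lemma cntNS1 x : #|[set c | nonsingular c && (fc c x == 0)%R]| = (p - (x != 0%R).+1)%N.
Proof.
rewrite card_sum sum_pair.
pose r1 : F := - (3 * x ^+ 2 / 4); pose r2 : F := - (3 * x ^+ 2).
transitivity (\sum_(a : F) ((a - r1) * (a - r2) * (a - r2) != 0)%R)%N.
  apply: eq_bigr => a _.
  rewrite (eq_bigr (fun b => nat_of_bool (nonsingular (a, b) && (b == - (x ^+ 3 + a * x))))); last first.
    by move=> b _; rewrite /fc /= addrC addr_eq0.
  rewrite sum_eq1 /nonsingular /=.
  have -> : 4 * a ^+ 3 + 27 * (- (x ^+ 3 + a * x)) ^+ 2 = 4 * ((a - r1) * (a - r2) * (a - r2)).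
    rewrite /r1 /r2; field; exact: four0.
  by rewrite mulf_eq0 (negbTE four0).
rewrite avoid3 cardF.
have -> : [set r1; r2; r2] = [set r1; r2] by apply/setP=> t; rewrite !inE -orbA orbb.
rewrite cards2.
suff -> : (r1 != r2) = (x != 0) by [].
congr negb; rewrite -subr_eq0.
have -> : r1 - r2 = (9 / 4) * x ^+ 2 by rewrite /r1 /r2; field; exact: four0.
rewrite mulf_eq0 sqrf_eq0.
have -> : (9 / 4 : F) == 0 = false.
  apply/negbTE; rewrite mulf_neq0 ?invr_neq0 ?four0 //.
  have -> : (9 : F) = 3 * 3 by ring.
  by rewrite mulf_neq0 ?three0.
by [].
Qed.


Lemma cntNS2 x y :
  #|[set c | nonsingular c && ((x != y) && (fc c x == 0)%R && (fc c y == 0)%R)]|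
  = ((x - y) * (x + 2 * y) * (2 * x + y) != 0)%R.
Proof.
rewrite card_sum.
rewrite (eq_bigr (fun c => nat_of_bool (((x - y) * (x + 2 * y) * (2 * x + y) != 0)
   && (c == c0 x y)))); first by rewrite sum_eq1.
move=> c _; congr nat_of_bool.
case xy: (x == y).
  by move/eqP: xy => ->; rewrite /= andbF subrr !mul0r eqxx.
apply/idP/idP.
  case/andP=> ns /andP[/andP[_ /eqP fx] /eqP fy].
  have e := two_roots fx fy (negbT xy).
  by rewrite -nsc0 -e ns e eqxx.
case/andP=> nz /eqP ->.
by rewrite nsc0 nz /= !factor !subrr !mul0r !mulr0 eqxx.
Qed.

Lemma avoid_pt x :
  (\sum_(y : F) ((x - y) * (x + 2 * y) * (2 * x + y) != 0)%R
    = p - (if (x == 0)%R then 1 else 3))%N.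
Proof.
transitivity (\sum_(y : F) ((y - x) * (y - (- (x / 2))) * (y - (- (2 * x)))
   != 0)%R)%N.
  apply: eq_bigr => y _.
  have -> : (x - y) * (x + 2 * y) * (2 * x + y) =
      (- 2) * ((y - x) * (y - (- (x / 2))) * (y - (- (2 * x))))
    by field; exact: two0.
  by rewrite mulf_eq0 oppr_eq0 (negbTE two0).
rewrite avoid3 cardF; case x0: (x == 0).
  move/eqP: x0 => ->; rewrite mul0r mulr0 oppr0.
  by rewrite !setUid cards1.
have n1 : (x != - (x / 2)).
  apply/negP=> /eqP h; move/negbT: x0 => /negP; apply.
  have : 3 / 2 * x == 0 by rewrite -subr_eq0 subr0; apply/eqP;
    transitivity (x - - (x / 2)); [field; exact: two0 | by rewrite -h subrr].
  by rewrite mulf_eq0 mulf_eq0 (negbTE three0) invr_eq0 (negbTE two0).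
have n2 : (x != - (2 * x)).
  apply/negP=> /eqP h; move/negbT: x0 => /negP; apply.
  have : 3 * x == 0 by apply/eqP; transitivity (x - - (2 * x)); [ring | by rewrite -h subrr].
  by rewrite mulf_eq0 (negbTE three0).
have n3 : (- (x / 2) != - (2 * x)).
  apply/negP=> /eqP h; move/negbT: x0 => /negP; apply.
  have : 3 / 2 * x == 0 by apply/eqP;
    transitivity (- (x / 2) - - (2 * x)); [field; exact: two0 | by rewrite h subrr].
  by rewrite mulf_eq0 mulf_eq0 (negbTE three0) invr_eq0 (negbTE two0).
by rewrite setUC cardsU1 cards2 n1 !inE negb_or eq_sym n2 eq_sym n3.
Qed.


Lemma ptA c x : ((nonsingular c && (c.1 == 0)) && (fc c x == 0))
   = (x != 0) && (c == (0, - x ^+ 3)).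
Proof.
case: c => a b; apply/idP/idP.
  case/andP=> /andP[ns /eqP /= a0] fx; move: fx ns; rewrite a0 /fc /= mul0r addr0.
  rewrite addrC addr_eq0 => /eqP ->; rewrite /nonsingular /= => ns.
  rewrite eqxx andbT; apply: contra ns => /eqP ->.
  by rewrite !expr0n /= mulr0 add0r oppr0 expr0n mulr0.
case/andP=> x0 /eqP [-> ->].
rewrite /nonsingular /fc /= eqxx andbT mul0r addr0 subrr eqxx andbT.
rewrite expr0n /= mulr0 add0r sqrrN -exprM mulf_neq0 ?expf_neq0 //.
have -> : (27 : F) = 3 * 3 * 3 by ring.
by rewrite !mulf_neq0 ?three0.
Qed.

Lemma cntA1 x : #|[set c | (nonsingular c && (c.1 == 0)) && (fc c x == 0)%R]| = (x != 0)%R.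
Proof.
rewrite card_sum (eq_bigr (fun c => nat_of_bool ((x != 0) && (c == (0, - x ^+ 3))))).
  by rewrite sum_eq1.
by move=> c _; rewrite ptA.
Qed.

Lemma cntA2 x y :
  #|[set c | (nonsingular c && (c.1 == 0)) && ((x != y) && (fc c x == 0)%R && (fc c y == 0)%R)]|
  = ((x != y) && (x != 0) && (y ^+ 3 == x ^+ 3))%R.
Proof.
rewrite card_sum (eq_bigr (fun c => nat_of_bool (((x != y) && (x != 0) && (y ^+ 3 == x ^+ 3))
   && (c == (0, - x ^+ 3))))).
  by rewrite sum_eq1.
move=> c _; congr nat_of_bool.
transitivity ((x != y) && (((nonsingular c && (c.1 == 0)) && (fc c x == 0)) && (fc c y == 0))).
  by case: (nonsingular c && (c.1 == 0)); case: (x != y); case: (fc c x == 0).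
rewrite ptA; case: (c =P (0, - x ^+ 3)) => [->|_]; last by rewrite ?andbF ?andFb ?andbF.
by rewrite /fc /= mul0r addr0 subr_eq0 !andbT andbA.
Qed.

Definition s3 := #|[set w : F | w ^+ 3 == 1]|.

Lemma fiber x : x != 0 -> #|[set y : F | y ^+ 3 == x ^+ 3]| = s3.
Proof.
move=> x0.
have -> : [set y : F | y ^+ 3 == x ^+ 3] = [set x * w | w in [set w : F | w ^+ 3 == 1]].
  apply/setP=> y; rewrite inE; apply/idP/imsetP.
    move/eqP=> h; exists (y / x); last by rewrite mulrC divfK.
    by rewrite inE expr_div_n h divff // expf_neq0.
  by case=> w; rewrite inE => /eqP w1 ->; rewrite exprMn w1 mulr1.
by rewrite card_imset //; apply: mulfI.
Qed.

Lemma sum_nz : (\sum_(x : F) (x != 0)%R = p.-1)%N.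
Proof.
rewrite -card_sum; transitivity #|[set~ (0 : F)]|; last by rewrite cardsC1 cardF.
by apply: eq_card => x; rewrite !inE.
Qed.

Lemma sum_eq0 : (\sum_(x : F) (x == 0)%R = 1)%N.
Proof.
rewrite -card_sum; transitivity #|[set (0 : F)]|; last by rewrite cards1.
by apply: eq_card => x; rewrite !inE.
Qed.

Lemma sum_const (k : nat) : (\sum_(x : F) k = p * k)%N.
Proof. by rewrite sum_nat_const cardT -cardE cardF. Qed.

Lemma P2A : (\sum_(x : F) \sum_(y : F) ((x != y) && (x != 0) && (y ^+ 3 == x ^+ 3))%R
   = p.-1 * (s3 - 1))%N.
Proof.
rewrite (eq_bigr (fun x => (x != 0)%R * (s3 - 1))%N).
  by rewrite -big_distrl /= sum_nz.
move=> x _; case x0: (x == 0) => /=.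
  by rewrite big1 // => y _; rewrite andbF.
rewrite mul1n -(fiber (negbT x0)) -(sum_neq (x := x) (P := fun y => (y ^+ 3 == x ^+ 3)%R)) //.
by apply: eq_bigr => y _; rewrite andbT.
Qed.


Lemma S_count : (3 * #|[set c | nonsingular c && (0 < nrt c)]| + ((p - 3) * p + 2)
   = 3 * ((p - 2) * p + 1))%N.
Proof.
have h := count_main (C := fun c => nonsingular c) (fun c h => h).
have e1 : (\sum_(x : F) #|[set c | nonsingular c && (fc c x == 0)%R]| = (p - 2) * p + 1)%N.
  rewrite (eq_bigr (fun x => (p - 2) + (x == 0)%R)%N).
    by rewrite big_split /= sum_const sum_eq0 mulnC.
  move=> x _; rewrite cntNS1; case: (x == 0) => /=; lia.
have e2 : (\sum_(x : F) \sum_(y : F) #|[set c | nonsingular c &&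
     ((x != y) && (fc c x == 0)%R && (fc c y == 0)%R)]| = (p - 3) * p + 2)%N.
  rewrite (eq_bigr (fun x => (p - 3) + 2 * (x == 0)%R)%N).
    by rewrite big_split /= sum_const -big_distrr /= sum_eq0 mulnC.
  move=> x _; transitivity (p - (if (x == 0)%R then 1 else 3))%N.
    by rewrite -avoid_pt; apply: eq_bigr => y _; rewrite cntNS2.
  case: (x == 0) => /=; lia.
by rewrite e1 e2 in h.
Qed.

Lemma Sa0_count : (3 * #|[set c | (nonsingular c && (c.1 == 0)%R) && (0 < nrt c)]|
   + p.-1 * (s3 - 1) = 3 * p.-1)%N.
Proof.
have h := count_main (C := fun c => nonsingular c && (c.1 == 0)%R) (fun c h => proj1 (andP h)).
have e1 : (\sum_(x : F) #|[set c | (nonsingular c && (c.1 == 0)%R) && (fc c x == 0)%R]| = p.-1)%N.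
  by rewrite -sum_nz; apply: eq_bigr => x _; rewrite cntA1.
have e2 : (\sum_(x : F) \sum_(y : F) #|[set c | (nonsingular c && (c.1 == 0)%R) &&
     ((x != y) && (fc c x == 0)%R && (fc c y == 0)%R)]| = p.-1 * (s3 - 1))%N.
  rewrite -P2A; apply: eq_bigr => x _; apply: eq_bigr => y _; by rewrite cntA2.
by rewrite e1 e2 in h.
Qed.


Definition uv (u : {unit F}) : F := val u.
Lemma uv1 : uv 1%g = 1. Proof. by []. Qed.
Lemma uvM u v : uv (u * v)%g = uv u * uv v. Proof. by []. Qed.
Definition act (c : F * F) (u : {unit F}) : F * F := (uv u ^+ 4 * c.1, uv u ^+ 6 * c.2).

Lemma act1 : act^~ 1%g =1 id.
Proof. by move=> [a b]; rewrite /act uv1 !expr1n !mul1r. Qed.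

Lemma actM x : act_morph act x.
Proof.
move=> u v; case: x => a b; rewrite /act /= uvM !exprMn.
by congr pair; rewrite mulrA [uv u ^+ _ * _]mulrC.
Qed.

Definition actU := TotalAction act1 actM.

Definition S := [set c : F * F | nonsingular c && has_2torsion c].

Lemma unit_nz (u : {unit F}) : uv u != 0.
Proof. by rewrite -unitfE /uv (valP u). Qed.

Lemma N2E : N2 p = #|orbit actU [set: {unit F}] @: S|.
Proof.
rewrite /N2 /S; congr #|_|; rewrite (@eq_imset _ _ _ (orbit actU [set: {unit F}])) // => c; apply/setP => c'.
rewrite inE; apply/idP/orbitP.
  case/existsP=> u /andP[/andP[u0 /eqP e1] /eqP e2].
  have Hu : u \is a GRing.unit by rewrite unitfE.
  exists (FinRing.unit F Hu); first by rewrite inE.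
  by case: c' e1 e2 => a' b' /= -> ->.
case=> v _ <-; apply/existsP; exists (uv v).
by rewrite /= !eqxx unit_nz.
Qed.

Lemma ns_act c u : nonsingular (act c u) = nonsingular c.
Proof.
rewrite /nonsingular /act /=.
have -> : 4 * (uv u ^+ 4 * c.1) ^+ 3 + 27 * (uv u ^+ 6 * c.2) ^+ 2
  = uv u ^+ 12 * (4 * c.1 ^+ 3 + 27 * c.2 ^+ 2) by ring.
by rewrite mulf_eq0 expf_eq0 (negbTE (unit_nz u)) andbF.
Qed.

Lemma nrt_act c u : nrt (act c u) = nrt c.
Proof.
rewrite /nrt; set v := uv u.
have v0 : v != 0 by exact: unit_nz.
have v20 : v ^+ 2 != 0 by rewrite expf_neq0.
have -> : roots (act c u) = [set v ^+ 2 * x | x in roots c].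
  apply/setP=> y; apply/idP/imsetP.
    rewrite inE => fy; exists (y / v ^+ 2); last by rewrite mulrC divfK.
    rewrite inE; move: fy; rewrite /fc /act /=.
    have -> : (y ^+ 3 + v ^+ 4 * c.1 * y + v ^+ 6 * c.2)
      = v ^+ 6 * ((y / v ^+ 2) ^+ 3 + c.1 * (y / v ^+ 2) + c.2).
      by field; rewrite v0.
    by rewrite mulf_eq0 expf_eq0 (negbTE v0) andbF.
  case=> x; rewrite !inE /fc /act /= => fx ->.
  have -> : ((v ^+ 2 * x) ^+ 3 + v ^+ 4 * c.1 * (v ^+ 2 * x) + v ^+ 6 * c.2)
     = v ^+ 6 * (x ^+ 3 + c.1 * x + c.2) by ring.
  by rewrite (eqP fx) mulr0.
by rewrite card_imset //; apply: mulfI.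
Qed.

Lemma actsS : [acts [set: {unit F}], on S | actU].
Proof.
apply/actsP => u _ c; rewrite !inE /= ns_act.
case ns: (nonsingular c) => //=.
by rewrite !torsion ?ns_act // nrt_act.
Qed.


Definition Sa := [set c in S | c.1 == 0].
Definition Sb := [set c in S | c.2 == 0].
Definition G (x : F) : nat :=
  if x ^+ 2 == 1 then #|S| else if x ^+ 2 == -1 then #|Sb|
  else if x ^+ 6 == 1 then #|Sa| else 0%N.

Lemma fix_char c u : (act c u == c) =
  ((uv u ^+ 4 == 1) || (c.1 == 0)) && ((uv u ^+ 6 == 1) || (c.2 == 0)).
Proof.
case: c => a b; rewrite /act /= xpair_eqE.
have e (w t : F) : (w * t == t) = ((w == 1) || (t == 0)).
  by rewrite -subr_eq0 -{2}[t]mul1r -mulrBl mulf_eq0 subr_eq0.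
by rewrite !e.
Qed.

Lemma ns00 : ~~ nonsingular (0 : F, 0 : F).
Proof. by rewrite /nonsingular /= !expr0n /= !mulr0 addr0 negbK eqxx. Qed.

Lemma fixS u : #|('Fix_(S | actU)[u])%g| = G (uv u).
Proof.
have -> : ('Fix_(S | actU)[u])%g = [set c in S | act c u == c].
  by apply/setP=> c; rewrite in_setI [in RHS]inE; congr (_ && _); apply/afix1P/eqP.
set v := uv u.
have e4 : (v ^+ 4 == 1) = (v ^+ 2 == 1) || (v ^+ 2 == -1).
  have h : v ^+ 4 - 1 = (v ^+ 2 - 1) * (v ^+ 2 + 1) by ring.
  by rewrite -subr_eq0 h mulf_eq0 !subr_eq0 addr_eq0.
rewrite /G; case h1: (v ^+ 2 == 1) => /=.
  have h4 : v ^+ 4 == 1 by rewrite e4 h1.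
  have h6 : v ^+ 6 == 1.
    have -> : v ^+ 6 = v ^+ 2 * v ^+ 2 * v ^+ 2 by ring.
    by rewrite (eqP h1) !mul1r.
  apply: eq_card => c; rewrite !inE fix_char h4 h6 /=.
  by rewrite andbT.
case h2: (v ^+ 2 == -1) => /=.
  have h4 : v ^+ 4 == 1 by rewrite e4 h2 orbT.
  have h6 : v ^+ 6 == 1 = false.
    have -> : v ^+ 6 = v ^+ 2 * v ^+ 2 * v ^+ 2 by ring.
    rewrite (eqP h2) mulrNN !mul1r; apply/negbTE; rewrite eq_sym.
    exact: one_neq_m1.
  by apply: eq_card => c; rewrite !inE fix_char h4 h6 /=.
have h4 : v ^+ 4 == 1 = false by rewrite e4 h1 h2.
case h6: (v ^+ 6 == 1) => /=.
  by apply: eq_card => c; rewrite !inE fix_char h4 h6 /= andbT.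
apply/eqP; rewrite cards_eq0; apply/eqP/setP=> c; rewrite !inE fix_char h4 h6 /=.
case: c => a b /=; case: eqP => [->|]; case: eqP => [->|] //=; rewrite ?andbF //.
by rewrite (negbTE ns00).
Qed.


Lemma sum_units : (\sum_(u in [set: {unit F}]) G (uv u) = \sum_(x : F) (x != 0)%R * G x)%N.
Proof.
rewrite -(big_imset (fun x => G x) (h := uv)); last by move=> u w _ _; apply: val_inj.
rewrite big_mkcond /=; apply: eq_bigr => x _.
have -> : (x \in uv @: [set: {unit F}]) = (x != 0).
  apply/imsetP/idP => [[u _ ->]|x0]; first exact: unit_nz.
  have Hx : x \is a GRing.unit by rewrite unitfE.
  by exists (FinRing.unit F Hx).
by case: (x != 0); rewrite ?mul1n.
Qed.

Definition E2 := #|[set x : F | x ^+ 2 == 1]|.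
Definition Ei := #|[set x : F | x ^+ 2 == -1]|.
Definition E6 := #|[set x : F | (x ^+ 2 != 1) && (x ^+ 2 != -1) && (x ^+ 6 == 1)]|.

Lemma burnside : (N2 p * p.-1 = E2 * #|S| + Ei * #|Sb| + E6 * #|Sa|)%N.
Proof.
have h := Frobenius_Cauchy actsS.
rewrite -N2E card_finField_unit cardF in h.
rewrite -h (eq_bigr (fun u => G (uv u))); last by move=> u _; exact: fixS.
rewrite sum_units /E2 /Ei /E6 !(card_sum (T := F)) !big_distrl /= -!big_split /=.
apply: eq_bigr => x _.
case x0: (x == 0).
  move/eqP: x0 => ->; rewrite expr0n /=.
  have z1 : ((0 : F) == -1) = false by rewrite eq_sym oppr_eq0 oner_eq0.
  have z2 : ((0 : F) ^+ 6 == 1) = false by rewrite expr0n /= eq_sym oner_eq0.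
  by rewrite z1 z2 andbF.
rewrite /G /=; case h1: (x ^+ 2 == 1) => /=.
  have -> : (x ^+ 2 == -1) = false by rewrite (eqP h1); apply/negbTE; exact: one_neq_m1.
  by rewrite /= ?mul1n ?mul0n ?addn0 ?add0n.
case: (x ^+ 2 == -1) => /=; first by rewrite ?mul1n ?mul0n ?addn0 ?add0n.
by case: (x ^+ 6 == 1); rewrite /= ?mul1n ?mul0n ?addn0 ?add0n.
Qed.


Lemma cardSb : #|Sb| = p.-1.
Proof.
have -> : Sb = [set (a, 0) | a in [set~ (0 : F)]].
  apply/setP=> -[a b]; rewrite /Sb /S !inE /=; apply/idP/imsetP.
    case/andP=> /andP[ns _] /eqP b0; exists a; last by rewrite b0.
    rewrite !inE; apply: contra ns => /eqP a0.
    by rewrite /nonsingular /= a0 b0 !expr0n /= !mulr0 addr0 eqxx.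
  case=> a'; rewrite !inE => a0 [-> ->].
  have ns : nonsingular (a', 0 : F).
    by rewrite /nonsingular /= expr0n /= mulr0 addr0 mulf_neq0 ?four0 ?expf_neq0.
  rewrite ns /= torsion // eqxx andbT; apply/card_gt0P; exists 0.
  by rewrite inE /fc /= expr0n /= mulr0 !addr0.
rewrite card_imset ?cardsC1 ?cardF // => a a' [].
by [].
Qed.

Lemma cardS : #|S| = #|[set c | nonsingular c && (0 < nrt c)%N]|.
Proof.
apply: eq_card => c; rewrite !inE; case ns: (nonsingular c) => //=.
by rewrite torsion.
Qed.

Lemma cardSa : #|Sa| = #|[set c | (nonsingular c && (c.1 == 0)) && (0 < nrt c)%N]|.
Proof.
apply: eq_card => c; rewrite !inE; case ns: (nonsingular c) => //=.
by rewrite torsion // andbC.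
Qed.

Lemma E2v : (2 %| p.-1)%N -> E2 = 2%N.
Proof. by move=> h; rewrite /E2 RU. Qed.

Lemma sq4 (x : F) : (x ^+ 4 == 1) = (x ^+ 2 == 1) || (x ^+ 2 == -1).
Proof.
have h : x ^+ 4 - 1 = (x ^+ 2 - 1) * (x ^+ 2 + 1) by ring.
by rewrite -subr_eq0 h mulf_eq0 !subr_eq0 addr_eq0.
Qed.

Lemma Eiv1 : (4 %| p.-1)%N -> Ei = 2%N.
Proof.
move=> h; have h2 : (2 %| p.-1)%N by apply: dvdn_trans h.
have := RU (isT : (0 < 4)%N) h.
have -> : [set x : F | x ^+ 4 == 1] = [set x | x ^+ 2 == 1] :|: [set x | x ^+ 2 == -1].
  by apply/setP=> x; rewrite !inE sq4.
have hI : [set x : F | x ^+ 2 == 1] :&: [set x | x ^+ 2 == -1] = set0.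
  apply/setP=> x; rewrite !inE; case: eqP => // ->.
  by rewrite (negbTE one_neq_m1).
rewrite cardsU hI cards0 subn0 RU //; rewrite /Ei => e; apply/eqP; rewrite -(eqn_add2l 2) e //.
Qed.

Lemma Eiv0 : (p.-1 %% 4 = 2)%N -> Ei = 0%N.
Proof.
move=> h; apply/eqP; rewrite cards_eq0; apply/eqP/setP => x; rewrite !inE.
apply/negbTE/negP => /eqP hx.
have h4 : x ^+ 4 = 1.
  have -> : x ^+ 4 = x ^+ 2 * x ^+ 2 by ring.
  by rewrite hx mulrNN mulr1.
have := RUg (isT : (0 < 4)%N) h4.
have -> : gcdn 4 p.-1 = 2%N by rewrite -gcdn_modr h.
by rewrite hx => /eqP; rewrite eq_sym (negbTE one_neq_m1).
Qed.

Lemma E6v1 : (6 %| p.-1)%N -> E6 = 4%N.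
Proof.
move=> h; have h2 : (2 %| p.-1)%N by apply: dvdn_trans h.
have := RU (isT : (0 < 6)%N) h.
have -> : [set x : F | x ^+ 6 == 1] = [set x | x ^+ 2 == 1] :|:
    [set x : F | (x ^+ 2 != 1) && (x ^+ 2 != -1) && (x ^+ 6 == 1)].
  apply/setP=> x; rewrite !inE.
  case h1 : (x ^+ 2 == 1) => /=.
    have -> : x ^+ 6 = x ^+ 2 * x ^+ 2 * x ^+ 2 by ring.
    by rewrite (eqP h1) !mul1r eqxx.
  case hm : (x ^+ 2 == -1) => //=.
  have -> : x ^+ 6 = x ^+ 2 * x ^+ 2 * x ^+ 2 by ring.
  rewrite (eqP hm) mulrNN !mul1r; apply/negbTE; rewrite eq_sym; exact: one_neq_m1.
have hI : [set x : F | x ^+ 2 == 1] :&: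
    [set x : F | (x ^+ 2 != 1) && (x ^+ 2 != -1) && (x ^+ 6 == 1)] = set0.
  by apply/setP=> x; rewrite !inE; case: (x ^+ 2 == 1).
rewrite cardsU hI cards0 subn0 RU //; rewrite /E6 => e; apply/eqP; rewrite -(eqn_add2l 2) e //.
Qed.

Lemma E6v0 : (p.-1 %% 6 = 4)%N -> E6 = 0%N.
Proof.
move=> h; apply/eqP; rewrite cards_eq0; apply/eqP/setP => x; rewrite !inE.
apply/negbTE/negP => /andP[/andP[h1 _] /eqP h6].
have := RUg (isT : (0 < 6)%N) h6.
have -> : gcdn 6 p.-1 = 2%N by rewrite -gcdn_modr h.
by move/eqP; rewrite (negbTE h1).
Qed.

Lemma s3v : (3 %| p.-1)%N -> s3 = 3%N.
Proof. by move=> h; rewrite /s3 RU. Qed.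

End Main.

Lemma final_arith (p r N X Y Ei E6 s : nat) : p = (r + 4)%N ->
  (3 * X + ((p - 3) * p + 2) = 3 * ((p - 2) * p + 1))%N ->
  (3 * Y + p.-1 * (s - 1) = 3 * p.-1)%N ->
  (N * p.-1 = 2 * X + Ei * p.-1 + E6 * Y)%N ->
  (E6 = 0%N \/ (E6 = 4%N /\ s = 3%N)) ->
  (3 * N + 2 = 4 * p + 3 * Ei + E6)%N.
Proof.
move=> -> hX hY hN e6.
have e1 : (r + 4 - 3 = r + 1)%N by lia.
have e2 : (r + 4 - 2 = r + 2)%N by lia.
have e3 : ((r + 4).-1 = r + 3)%N by lia.
rewrite e1 e2 in hX; rewrite e3 in hY hN.
have h3X : (3 * X = (r + 3) * (2 * r + 7))%N.
  apply/eqP; rewrite -(eqn_add2r ((r + 1) * (r + 4) + 2)) hX; apply/eqP; ring.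
have q0 : (0 < r + 3)%N by lia.
apply/eqP; rewrite -(eqn_pmul2l q0); apply/eqP.
transitivity (3 * (N * (r + 3)) + 2 * (r + 3))%N; first by ring.
rewrite hN.
case: e6 => [-> | [-> es]].
  transitivity (2 * (3 * X) + 3 * Ei * (r + 3) + 2 * (r + 3))%N; first by ring.
  rewrite h3X; ring.
have h3Y : (3 * Y = r + 3)%N by move: hY; rewrite es; lia.
transitivity (2 * (3 * X) + 3 * Ei * (r + 3) + 4 * (3 * Y) + 2 * (r + 3))%N; first by ring.
rewrite h3X h3Y; ring.
Qed.

Theorem proposition9 (p : nat) : prime p -> (3 < p)%N ->
  [/\ (p %% 12 = 1)%N -> N2 p = ((4 * p + 8) %/ 3)%N,
      (p %% 12 = 5)%N -> N2 p = ((4 * p + 4) %/ 3)%N,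
      (p %% 12 = 7)%N -> N2 p = ((4 * p + 2) %/ 3)%N
    & (p %% 12 = 11)%N -> N2 p = ((4 * p - 2) %/ 3)%N].
Proof.
move=> pr p3.
have B := burnside pr p3.
have hS := S_count pr p3; have hSa := Sa0_count pr p3.
rewrite -(cardS pr p3) in hS; rewrite -(cardSa pr p3) in hSa.
rewrite (cardSb pr p3) in B.
have ep : p = ((p - 4) + 4)%N by lia.
split => h12.
- rewrite (E2v pr p3 ltac:(lia)) in B.
  have := final_arith ep hS hSa B (or_intror (conj (E6v1 pr p3 ltac:(lia)) (s3v pr p3 ltac:(lia)))).
  rewrite (Eiv1 pr p3 ltac:(lia)) (E6v1 pr p3 ltac:(lia)); clear; lia.
- rewrite (E2v pr p3 ltac:(lia)) in B.
  have := final_arith ep hS hSa B (or_introl (E6v0 pr ltac:(lia))).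
  rewrite (Eiv1 pr p3 ltac:(lia)) (E6v0 pr ltac:(lia)); clear; lia.
- rewrite (E2v pr p3 ltac:(lia)) in B.
  have := final_arith ep hS hSa B (or_intror (conj (E6v1 pr p3 ltac:(lia)) (s3v pr p3 ltac:(lia)))).
  rewrite (Eiv0 pr p3 ltac:(lia)) (E6v1 pr p3 ltac:(lia)); clear; lia.
- rewrite (E2v pr p3 ltac:(lia)) in B.
  have := final_arith ep hS hSa B (or_introl (E6v0 pr ltac:(lia))).
  rewrite (Eiv0 pr p3 ltac:(lia)) (E6v0 pr ltac:(lia)); clear; lia.
Qed.
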